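(* For the system $$u_{0,0}-v_{1,1}=0,\qquad (u_{1,0}-u_{0,0})(v_{1,0}-u_{0,0})-(u_{0,1}-u_{0,0})(v_{0,1}-u_{0,0})=0,$$ the following second order flow is a symmetry: $$\frac{\partial u_{0,0}}{\partial s_2}=(u_{0,0}-v_{1,0})\big(u_{2,0}v_{2,0}-(u_{2,0}+v_{2,0}-v_{0,0})u_{1,0}+(u_{1,0}-v_{0,0})u_{0,0}\big),$$ $$\frac{\partial v_{0,0}}{\partial s_2}=(u_{-1,0}-v_{0,0})\big(u_{-2,0}v_{-2,0}-(u_{-2,0}+v_{-2,0}-u_{0,0})v_{-1,0}+(v_{-1,0}-u_{0,0})v_{0,0}\big).$$
   Context: Unknowns $u,v$ on $\mathbb Z^2$, $u_{i,j}=u(n+i,m+j)$, similarly $v$. Shifts $\mathcal S:n\mapsto n+1$, $\mathcal T:m\mapsto m+1$. For a quad system $\boldsymbol Q(\boldsymbol u_{0,0},\boldsymbol u_{1,0},\boldsymbol u_{0,1},\boldsymbol u_{1,1})=\boldsymbol 0$ with $\boldsymbol u=(u,v)$ and Jacobians $\mathrm Q_{(p,q)}=\partial\boldsymbol Q/\partial\boldsymbol u_{p,q}$, a vector function $\boldsymbol F=(F^{(1)},F^{(2)})$ of finitely many shifts of $\boldsymbol u$ is a symmetry, written $\partial_t u_{0,0}=F^{(1)}$, $\partial_t v_{0,0}=F^{(2)}$, if $\mathrm Q_{(0,0)}\boldsymbol F+\mathrm Q_{(1,0)}\mathcal S(\boldsymbol F)+\mathrm Q_{(0,1)}\mathcal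 T(\boldsymbol F)+\mathrm Q_{(1,1)}\mathcal S\mathcal T(\boldsymbol F)=\boldsymbol 0$ holds on all solutions of the system. *)

(* Defs.v *)
From HB Require Import structures.
From mathcomp Require Import all_boot all_order all_algebra.
Set Implicit Arguments. Unset Strict Implicit. Unset Printing Implicit Defensive.
Import Order.TTheory GRing.Theory Num.Theory.
Local Open Scope ring_scope.

(* Lattice fields on Z^2: u n m = u(n,m); u_{i,j} at (n,m) is u (n+i) (m+j). *)
Definition lattice (R : Type) := int -> int -> R.

Section Sys.
Variable R : numFieldType.
Implicit Types u v : lattice R.

Definition Q1 u v n m : R := u n m - v (n+1)%R (m+1)%R.
Definition Q2 u v n m : R :=
  (u (n+1)%R m - u n m) * (v (n+1)%R m - u n m)
  - (u n (m+1)%R - u n m) * (v n (m+1)%R - u n m).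

Definition is_solution u v : Prop :=
  forall n m, Q1 u v n m = 0 /\ Q2 u v n m = 0.

Definition F1 u v n m : R :=
  (u n m - v (n+1)%R m) *
  (u (n+2)%R m * v (n+2)%R m
   - (u (n+2)%R m + v (n+2)%R m - v n m) * u (n+1)%R m
   + (u (n+1)%R m - v n m) * u n m).
Definition F2 u v n m : R :=
  (u (n-1)%R m - v n m) *
  (u (n-2)%R m * v (n-2)%R m
   - (u (n-2)%R m + v (n-2)%R m - u n m) * v (n-1)%R m
   + (v (n-1)%R m - u n m) * v n m).

(* Symmetry condition
     Q_(0,0) F + Q_(1,0) S(F) + Q_(0,1) T(F) + Q_(1,1) S T(F) = 0
   at (n,m), with the Jacobians Q_(p,q) = dQ/d(u_{p,q},v_{p,q}) of the
   system above written out explicitly: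
   Q1: Q_(0,0) = [1 0], Q_(1,0) = Q_(0,1) = [0 0], Q_(1,1) = [0 -1];
   Q2: Q_(0,0) = [-(v10-u00)-(u10-u00)+(v01-u00)+(u01-u00)  0],
       Q_(1,0) = [v10-u00  u10-u00], Q_(0,1) = [-(v01-u00)  -(u01-u00)],
       Q_(1,1) = [0 0]. *)
Definition linearized_eq1 (G1 G2 : lattice R) u v n m : R :=
  G1 n m - G2 (n+1)%R (m+1)%R.
Definition linearized_eq2 (G1 G2 : lattice R) u v n m : R :=
  let u00 := u n m in
  let u10 := u (n+1)%R m in let v10 := v (n+1)%R m in
  let u01 := u n (m+1)%R in let v01 := v n (m+1)%R in
  (- (v10 - u00) - (u10 - u00) + (v01 - u00) + (u01 - u00)) * G1 n m
  + (v10 - u00) * G1 (n+1)%R m + (u10 - u00) * G2 (n+1)%R m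
  - (v01 - u00) * G1 n (m+1)%R - (u01 - u00) * G2 n (m+1)%R.

Definition is_symmetry (G : lattice R -> lattice R -> lattice R * lattice R)
  : Prop :=
  forall u v, is_solution u v -> forall n m,
    linearized_eq1 (G u v).1 (G u v).2 u v n m = 0 /\
    linearized_eq2 (G u v).1 (G u v).2 u v n m = 0.

Definition flow_s2 u v : lattice R * lattice R := (F1 u v, F2 u v).
End Sys.

(* Main.v *)
Require Import Defs.
From HB Require Import structures.
From mathcomp Require Import all_boot all_order all_algebra ring.
Import GRing.Theory.
Local Open Scope ring_scope.
Lemma core1 (R : numFieldType) (pm2 pm1 p0 p1 p2 am3 am2 am1 a0 a1 a2 a3 qm2 qm1 q0 q1 q2 : R) (hm2 : (am1 - am2) * (pm2 - am2) - (qm2 - am2) * (am3 - am2) = 0) (hm1 : (a0 - am1) * (pm1 - am1) - (qm1 - am1) * (am2 - am1) = 0) (h0 : (a1 - a0) * (p0 - a0) - (q0 - a0) * (am1 - a0) = 0) (h1 : (a2 - a1) * (p1 - a1) - (q1 - a1) * (a0 - a1) = 0) (h2 : (a3 - a2) * (p2 - a2) - (q2 - a2) * (a1 - a2) = 0) :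
  (p1 * a0 * a2 - a0 * a1 * a2 - p1 * a0 * a1 + pm1 * a0 * a1 + a0 * a0 * a1 - pm1 * a0 * a0 - p0 * p1 * a2 + p0 * a1 * a2 + p0 * p1 * a1 - pm1 * p0 * a1 - p0 * a0 * a1 + pm1 * p0 * a0 - am2 * qm1 * q0 + am1 * qm1 * q0 + am2 * am1 * q0 - am1 * q0 * q1 - am1 * a0 * q0 + a0 * q0 * q1 + am2 * a0 * qm1 - am1 * a0 * qm1 - am2 * am1 * a0 + am1 * a0 * q1 + am1 * a0 * a0 - a0 * a0 * q1) = 0.
Proof.
transitivity ((0) * ((am1 - am2) * (pm2 - am2) - (qm2 - am2) * (am3 - am2)) + (- a0 + q0) * ((a0 - am1) * (pm1 - am1) - (qm1 - am1) * (am2 - am1)) + (- pm1 + q1) * ((a1 - a0) * (p0 - a0) - (q0 - a0) * (am1 - a0)) + (- p0 + a0) * ((a2 - a1) * (p1 - a1) - (q1 - a1) * (a0 - a1)) + (0) * ((a3 - a2) * (p2 - a2) - (q2 - a2) * (a1 - a2))); first ring.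
by rewrite hm2 hm1 h0 h1 h2; ring.
Qed.

Lemma core2 (R : numFieldType) (pm2 pm1 p0 p1 p2 am3 am2 am1 a0 a1 a2 a3 qm2 qm1 q0 q1 q2 : R) (hm2 : (am1 - am2) * (pm2 - am2) - (qm2 - am2) * (am3 - am2) = 0) (hm1 : (a0 - am1) * (pm1 - am1) - (qm1 - am1) * (am2 - am1) = 0) (h0 : (a1 - a0) * (p0 - a0) - (q0 - a0) * (am1 - a0) = 0) (h1 : (a2 - a1) * (p1 - a1) - (q1 - a1) * (a0 - a1) = 0) (h2 : (a3 - a2) * (p2 - a2) - (q2 - a2) * (a1 - a2) = 0) :
  (p1 * a0 * a1 * a1 - a0 * a0 * a1 * a1 - p0 * p1 * a1 * a1 + p0 * a0 * a1 * a1 + p1 * am1 * a0 * a2 - am1 * a0 * a1 * a2 - p1 * am1 * a0 * a1 + am1 * a0 * a0 * a1 - p0 * p1 * am1 * a2 + p0 * am1 * a1 * a2 + p0 * p1 * am1 * a1 - p0 * am1 * a0 * a1 + p1 * a0 * a2 * q0 - a0 * a1 * a2 * q0 - p1 * a0 * a1 * q0 + pm1 * a0 * a1 * q0 + a0 * a0 * a1 * q0 - pm1 * a0 * a0 * q0 - p0 * p1 * a2 * q0 + p0 * a1 * a2 * q0 + p0 * p1 * a1 * q0 - pm1 * p0 * a1 * q0 - p0 * a0 * a1 * q0 + pm1 * p0 * a0 * q0 + p0 * p2 * a1 * a3 - p0 * a1 * a2 * a3 - p0 * p2 * a1 * a2 - p0 * p1 * p2 * a3 + p0 * p1 * a2 *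 a3 + p0 * p1 * p2 * a2 - p2 * a0 * a1 * a3 + a0 * a1 * a2 * a3 + p2 * a0 * a1 * a2 + p1 * p2 * a0 * a3 - p1 * a0 * a2 * a3 - p1 * p2 * a0 * a2 + pm2 * am1 * a0 * a1 - pm2 * pm1 * a0 * a1 - pm2 * p0 * am1 * a1 + pm2 * pm1 * p0 * a1 - pm2 * am1 * a0 * a0 + pm2 * pm1 * a0 * a0 + pm2 * p0 * am1 * a0 - pm2 * pm1 * p0 * a0 - am1 * a1 * q0 * q2 + am1 * q0 * q1 * q2 + am1 * a1 * q0 * q1 - am1 * am1 * q0 * q1 - am1 * q0 * q0 * q1 + am1 * a0 * a1 * q2 - am1 * a0 * q1 * q2 - am1 * a0 * a1 * q1 + am1 * am1 * a0 * q1 + 2%:R * am1 * a0 * q0 * q1 + a0 * a1 * q0 * q2 - a0 * q0 * q1 * q2 - a0 * a1 * q0 * q1 + a0 * q0 * q0 * q1 - am1 * a0 * q0 * q0 - a0 * a0 * a1 * q2 + a0 * a0 * q1 * q2 + a0 * a0 * a1 * q1 - am1 * a0 * a0 * q1 - a0 * a0 * q0 * q1 + am1 * a0 * a0 * q0 - am3 * qm2 * qm1 * q0 + am2 * qm2 * qm1 * q0 + am3 * am2 * qm1 * q0 - am2 * qm1 * q0 * q0 - am2 * am1 * qm1 * q0 + am1 * qm1 * q0 * q0 + am3 * am1 * qm2 * q0 - am2 * am1 * qm2 * q0 - am3 * am2 * am1 * q0 + am2 * am1 * q0 * q0 + am2 * am1 * am1 * q0 + am3 * a0 * qm2 * qm1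 - am2 * a0 * qm2 * qm1 - am3 * am2 * a0 * qm1 + am2 * a0 * qm1 * q0 + am2 * am1 * a0 * qm1 - am1 * a0 * qm1 * q0 - am3 * am1 * a0 * qm2 + am2 * am1 * a0 * qm2 + am3 * am2 * am1 * a0 - am2 * am1 * a0 * q0 - am2 * am1 * am1 * a0) = 0.
Proof.
transitivity ((am1 * a0 - am1 * q0 - a0 * qm1 + qm1 * q0) * ((am1 - am2) * (pm2 - am2) - (qm2 - am2) * (am3 - am2)) + (pm2 * a0 - pm2 * q0 - a0 * q0 + q0 * q0) * ((a0 - am1) * (pm1 - am1) - (qm1 - am1) * (am2 - am1)) + (- pm2 * am1 + pm2 * pm1 - pm1 * q0 - p1 * a1 + p1 * a2 + am1 * q1 + a0 * a1 - a0 * q1 - a1 * a2 + a1 * q2 + q0 * q1 - q1 * q2) * ((a1 - a0) * (p0 - a0) - (q0 - a0) * (am1 - a0)) + (- p0 * am1 + p0 * a0 - p0 * q0 + p0 * q2 + am1 * q0 - a0 * q2) * ((a2 - a1) * (p1 - a1) - (q1 - a1) * (a0 - a1)) + (p0 * a1 - p0 * p1 + p1 * a0 - a0 * a1) * ((a3 - a2) * (p2 - a2) - (q2 - a2) * (a1 - a2))); first ring.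
by rewrite hm2 hm1 h0 h1 h2; ring.
Qed.

Theorem mainTheorem10 (R : numFieldType) : is_symmetry (@flow_s2 R).
Proof.
move=> u v hs n m.
have hv : forall x y, v x y = u (x-1) (y-1).
  move=> x y; have := (hs (x-1) (y-1)).1; rewrite /Q1 !subrK.
  by move/eqP; rewrite subr_eq0 => /eqP.
have r0 : n + 2 + 1 = n + 3 by ring.
have r1 : n + 1 + 2 = n + 3 by ring.
have r2 : n + 1 + 1 = n + 2 by ring.
have r3 : n + 3 - 1 = n + 2 by ring.
have r4 : n + 2 - 1 = n + 1 by ring.
have r6 : n + 1 - 2 = n - 1 by ring.
have r5 : n + 1 - 1 = n by ring.
have r7 : n - 1 - 1 = n - 2 by ring.
have r8 : n - 2 - 1 = n - 3 by ring.
have r9 : n - 2 + 1 = n - 1 by ring.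
have r10 : n - 1 + 1 = n by ring.
have s1 : m + 1 - 1 = m by ring.
have s2 : m - 1 + 1 = m by ring.
have [_ hm2] := hs (n - 2) m.
have [_ hm1] := hs (n - 1) m.
have [_ h0] := hs n m.
have [_ h1] := hs (n + 1) m.
have [_ h2] := hs (n + 2) m.
rewrite /Q2 !hv in hm2 hm1 h0 h1 h2.
rewrite /linearized_eq1 /linearized_eq2 /flow_s2 /F1 /F2 /= !hv.
rewrite ?r0 ?r1 ?r2 ?r3 ?r4 ?r6 ?r5 ?r7 ?r8 ?r9 ?r10 ?s1 ?s2 in hm2 hm1 h0 h1 h2 *.
rewrite ?r0 ?r1 ?r2 ?r3 ?r4 ?r6 ?r5 ?r7 ?r8 ?r9 ?r10 ?s1 ?s2 in hm2 hm1 h0 h1 h2 *.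
split.
  have H := (core1 R (u (n - 2) (m - 1)) (u (n - 1) (m - 1)) (u n (m - 1)) (u (n + 1) (m - 1)) (u (n + 2) (m - 1)) (u (n - 3) m) (u (n - 2) m) (u (n - 1) m) (u n m) (u (n + 1) m) (u (n + 2) m) (u (n + 3) m) (u (n - 2) (m + 1)) (u (n - 1) (m + 1)) (u n (m + 1)) (u (n + 1) (m + 1)) (u (n + 2) (m + 1)) hm2 hm1 h0 h1 h2).
  apply: etrans H; ring.
have H := (core2 R (u (n - 2) (m - 1)) (u (n - 1) (m - 1)) (u n (m - 1)) (u (n + 1) (m - 1)) (u (n + 2) (m - 1)) (u (n - 3) m) (u (n - 2) m) (u (n - 1) m) (u n m) (u (n + 1) m) (u (n + 2) m) (u (n + 3) m) (u (n - 2) (m + 1)) (u (n - 1) (m + 1)) (u n (m + 1)) (u (n + 1) (m + 1)) (u (n + 2) (m + 1)) hm2 hm1 h0 h1 h2).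
apply: etrans H; ring.
Qed.
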